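(* Let $f$ be an $n$-variable Boolean function. Then $${AI}(f)=\min\Big(\min_{1\le k\le n}\mu_k(f+1),\ \min_{1\le k\le n}\mu_k(f)\Big).$$
   Context: An $n$-variable Boolean function is a map $\mathbb{F}_2^n\to\mathbb{F}_2$, with algebraic degree $\deg$ the degree of its algebraic normal form. ${LDA}(h)$ is the minimum algebraic degree of a nonzero $g$ with $h\cdot g=0$, and ${AI}(f)=\min({LDA}(f),{LDA}(1+f))$. For $1\le k\le n$, ${MUL}_k(h)=\{h\cdot g:\deg(g)\le k\}$ and $\mu_k(h)$ is the minimum algebraic degree of the nonzero elements of ${MUL}_k(h)$. *)

(* Defs.v *)
From mathcomp Require Import all_boot.
Set Implicit Arguments. Unset Strict Implicit. Unset Printing Implicit Defensive.

Definition point (n : nat) := {ffun 'I_n -> bool}.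
Definition BF (n : nat) := {ffun point n -> bool}.

Definition bf_zero n : BF n := [ffun _ => false].
Definition bf_one n : BF n := [ffun _ => true].
Definition bf_add n (f g : BF n) : BF n := [ffun x => f x (+) g x].
Definition bf_mul n (f g : BF n) : BF n := [ffun x => f x && g x].

(* Coefficient of the monomial prod_{i in u} x_i in the algebraic normal form
   of g (binary Moebius transform): a_u = sum_{x <= u} g(x). *)
Definition anf n (g : BF n) (u : {set 'I_n}) : bool :=
  \big[addb/false]_(x : point n | [forall i, x i ==> (i \in u)]) g x.

(* Algebraic degree: the largest size of a monomial in the ANF (0 for g = 0). *)
Definition deg n (g : BF n) : nat := \max_(u : {set 'I_n} | anf g u) #|u|.

(* Minima over possibly empty sets of degrees: the empty minimum is
   "infinity", encoded as n.+1 (every degree is <= n). *)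
Definition LDA n (h : BF n) : nat :=
  \big[minn/n.+1]_(g : BF n | (g != bf_zero n) && (bf_mul h g == bf_zero n)) deg g.

Definition AI n (f : BF n) : nat := minn (LDA f) (LDA (bf_add (bf_one n) f)).

Definition inMUL n (k : nat) (h p : BF n) : bool :=
  [exists g : BF n, (deg g <= k) && (p == bf_mul h g)].

Definition mu n (k : nat) (h : BF n) : nat :=
  \big[minn/n.+1]_(p : BF n | (p != bf_zero n) && inMUL k h p) deg p.

(* Main.v *)
Require Import Defs.
From mathcomp Require Import all_boot.

Section S.
Variable n : nat.

Lemma deg_le (g : BF n) : deg g <= n.
Proof.
rewrite /deg; apply/bigmax_leqP => u _.
by rewrite -[X in _ <= X]card_ord max_card.
Qed.

Lemma le_bigmin_seq (I : eqType) (r : seq I) (P : pred I) (F : I -> nat) (i : I) :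
  i \in r -> P i -> \big[minn/n.+1]_(j <- r | P j) F j <= F i.
Proof.
elim: r => // a r IH; rewrite in_cons big_cons => /orP [/eqP <- -> | Hi Pi].
  exact: geq_minl.
case: (P a); last exact: IH.
by apply: leq_trans (geq_minr _ _) _; apply: IH.
Qed.

Lemma le_bigmin (I : finType) (P : pred I) (F : I -> nat) (i : I) :
  P i -> \big[minn/n.+1]_(j | P j) F j <= F i.
Proof. by move=> Pi; apply: le_bigmin_seq; rewrite ?mem_index_enum. Qed.

Lemma ge_bigmin (I : Type) (r : seq I) (P : pred I) (F : I -> nat) m :
  m <= n.+1 -> (forall i, P i -> m <= F i) -> m <= \big[minn/n.+1]_(j <- r | P j) F j.
Proof.
move=> H1 H2; apply: (big_ind (fun x => m <= x)) => //.
by move=> x y Hx Hy; rewrite leq_min Hx Hy.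
Qed.

Lemma LDA_le (h : BF n) : LDA h <= n.+1.
Proof. apply: (big_ind (fun x => x <= n.+1)) => //.
  by move=> x y Hx _; rewrite geq_min Hx.
by move=> g _; apply: leq_trans (deg_le g) (leqnSn n).
Qed.

Lemma mu_le k (h : BF n) : mu k h <= n.+1.
Proof. apply: (big_ind (fun x => x <= n.+1)) => //.
  by move=> x y Hx _; rewrite geq_min Hx.
by move=> g _; apply: leq_trans (deg_le g) (leqnSn n).
Qed.

Lemma keyA (h h' : BF n) (Hc : forall x, h' x = ~~ h x) k :
  LDA h <= mu k h'.
Proof.
apply: ge_bigmin; first exact: LDA_le.
move=> p /andP [Hp /existsP [g /andP [_ /eqP Hpg]]].
apply: le_bigmin; rewrite Hp /=; apply/eqP/ffunP => x.
by rewrite Hpg !ffunE Hc; case: (h x).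
Qed.

Lemma keyB (h h' : BF n) (Hc : forall x, h' x = ~~ h x) :
  mu n h' <= LDA h.
Proof.
apply: ge_bigmin; first exact: mu_le.
move=> g /andP [Hg /eqP Hhg].
apply: le_bigmin; rewrite Hg /=; apply/existsP; exists g.
rewrite deg_le /=; apply/eqP/ffunP => x.
have := congr1 (fun F : BF n => F x) Hhg; rewrite !ffunE Hc.
by case: (h x); case: (g x).
Qed.

Lemma key (h h' : BF n) (Hc : forall x, h' x = ~~ h x) (hn : 0 < n) :
  \big[minn/n.+1]_(1 <= k < n.+1) mu k h' = LDA h.
Proof.
apply/eqP; rewrite eqn_leq; apply/andP; split.
  apply: (@leq_trans (mu n h')); last exact: keyB.
  apply: (@le_bigmin_seq nat _ xpredT) => //.
  by rewrite mem_index_iota hn ltnSn.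
by apply: ge_bigmin; [exact: LDA_le | move=> k _; exact: keyA].
Qed.

End S.

Theorem proposition10 (n : nat) (hn : 0 < n) (f : BF n) :
  AI f =
  minn (\big[minn/n.+1]_(1 <= k < n.+1) mu k (bf_add (bf_one n) f))
       (\big[minn/n.+1]_(1 <= k < n.+1) mu k f).
Proof.
rewrite /AI (@key n f (bf_add (bf_one n) f)) ?(@key n (bf_add (bf_one n) f) f) //.
  by move=> x; rewrite !ffunE; case: (f x).
by move=> x; rewrite !ffunE.
Qed.
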